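(* If two bounding triples in $BT_n$ are conjugate under the action of $GL_\infty(\mathbb{F}_q)$, then they are conjugate under the action of the subgroup $GL_n(\mathbb{F}_q)$.
   Context: $\mathbb{F}_q^\infty$ has basis $e_1,e_2,\dots$; $\mathbb{F}_q^n=\mathrm{span}\{e_1,\dots,e_n\}$. $GL_\infty(\mathbb{F}_q)=\varinjlim GL_n(\mathbb{F}_q)$ under $g\mapsto\operatorname{diag}(g,\mathrm{Id})$, i.e. invertible $\mathbb{Z}_{>0}\times\mathbb{Z}_{>0}$ matrices differing from the identity in finitely many entries; $g^T$ is the transpose. A subspace is smooth if it contains $e_i$ for all sufficiently large $i$. A bounding triple is $(W,g,V)$ with $W,V$ smooth, $g\in GL_\infty(\mathbb{F}_q)$, $g$ acting as identity on $V$ and $g^T$ acting as identity on $W$. $BT_n$ is the set of bounding triples with $e_{n+1},e_{n+2},\dots\in V\cap W$. $GL_\infty(\mathbb{F}_q)$ acts by $x\cdot(W,g,V)=(x^{-T}W,xgx^{-1},xV)$, $x^{-T}=(x^{-1})^T$. *)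

(* Defs.v *)
From HB Require Import structures.
From mathcomp Require Import all_boot all_order all_algebra.
From mathcomp Require Import boolp classical_sets fsbigop.
Set Implicit Arguments. Unset Strict Implicit. Unset Printing Implicit Defensive.
Import Order.TTheory GRing.Theory Num.Theory.
Local Open Scope classical_set_scope.
Local Open Scope ring_scope.

(* Indexing convention: the paper's basis vector e_{k+1} is index k : nat
   here, so F^n = span of indices 0..n-1. *)
Section Defs.
Variable F : finFieldType.

(* vectors of F^oo (finitely supported sequences) and Z>0 x Z>0 matrices *)
Definition vec := nat -> F.
Definition mat := nat -> nat -> F.

Definition finsupp (v : vec) : Prop := exists N, forall i, (N <= i)%N -> v i = 0.

Definition ebasis (k : nat) : vec := fun j => (k == j)%:R.
Definition idm : mat := fun i j => (i == j)%:R.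
Definition trm (g : mat) : mat := fun i j => g j i.

Definition finitary (g : mat) : Prop :=
  exists N, forall i j, (N <= i)%N || (N <= j)%N -> g i j = idm i j.

Definition mulm (g h : mat) : mat :=
  fun i j => \sum_(k \in [set: nat]) g i k * h k j.
Definition appm (g : mat) (v : vec) : vec :=
  fun i => \sum_(k \in [set: nat]) g i k * v k.

Definition GLinv (x y : mat) : Prop :=
  finitary x /\ finitary y /\ mulm x y = idm /\ mulm y x = idm.

Definition GLinf (g : mat) : Prop := exists h, GLinv g h.

Definition subspace (S : set vec) : Prop :=
  S `<=` finsupp /\ S (fun _ => 0) /\
  (forall (a : F) u v, S u -> S v -> S (fun i => a * u i + v i)).

Definition smooth (S : set vec) : Prop :=
  subspace S /\ exists N, forall i, (N <= i)%N -> S (ebasis i).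

Definition fixes (g : mat) (S : set vec) : Prop :=
  forall v, S v -> appm g v = v.

Definition triple := (set vec * mat * set vec)%type.

Definition bounding (T : triple) : Prop :=
  let: (W, g, V) := T in
  [/\ smooth W, smooth V, GLinf g, fixes g V & fixes (trm g) W].

Definition BT (n : nat) (T : triple) : Prop :=
  bounding T /\
  let: (W, g, V) := T in forall i, (n <= i)%N -> V (ebasis i) /\ W (ebasis i).

(* x . (W, g, V) = (x^{-T} W, x g x^{-1}, x V), where y = x^{-1} *)
Definition act (x y : mat) (T : triple) : triple :=
  let: (W, g, V) := T in
  (appm (trm y) @` W, mulm (mulm x g) y, appm x @` V).

(* the embedding GL_n -> GL_oo, A |-> diag(A, Id) *)
Definition embGL (n : nat) (A : 'M[F]_n) : mat :=
  fun i j => match insub i, insub j with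
             | Some i', Some j' => A i' j'
             | _, _ => idm i j
             end.
End Defs.

(* Main.v *)
Require Import Defs.
From HB Require Import structures.
From mathcomp Require Import all_boot all_order all_algebra.
From mathcomp Require Import boolp classical_sets fsbigop ring.
Set Implicit Arguments. Unset Strict Implicit. Unset Printing Implicit Defensive.
Import Order.TTheory GRing.Theory Num.Theory.
Local Open Scope classical_set_scope.
Local Open Scope ring_scope.

Section S.
Variable F : finFieldType.
Local Notation Id := (idm F).
Local Notation e := (ebasis F).

Definition bnd N (g : mat F) := forall i j, (N <= i)%N || (N <= j)%N -> g i j = Id i j.

Lemma fsumT (f : nat -> F) N : (forall k, (N <= k)%N -> f k = 0) ->
  \sum_(k \in [set: nat]) f k = \sum_(k < N) f k.
Proof.
move=> H; rewrite fsbig_ord; apply/esym/fsbig_widen => // k [_ /=].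
rewrite /preimage /= => Hk; apply: H; rewrite leqNgt; apply/negP => /= Hk'; apply: Hk.
done.
Qed.

Lemma fsum1 (f : nat -> F) i : (forall k, k <> i -> f k = 0) ->
  \sum_(k \in [set: nat]) f k = f i.
Proof.
move=> H; rewrite (@fsumT _ i.+1); last by move=> k hk; apply: H => E; subst; rewrite ltnn in hk.
rewrite big_ord_recr /= big1 ?add0r // => k _; apply: H => E.
by have := ltn_ord k; rewrite E ltnn.
Qed.

Lemma IdE i j : Id i j = (i == j)%:R. Proof. by []. Qed.

Lemma appm_e (g : mat F) j i : appm g (e j) i = g i j.
Proof.
rewrite /appm (@fsum1 _ j) /ebasis ?eqxx ?mulr1 // => k hk.
by rewrite (_ : (j == k) = false) ?mulr0 //; apply/eqP => E; apply: hk.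
Qed.

Lemma appmE N g v : bnd N g ->
  appm g v = fun i => if (i < N)%N then \sum_(k < N) g i k * v k else v i.
Proof.
move=> Hg; apply: funext => i; rewrite /appm; case: ltnP => hi.
  rewrite (@fsumT _ N) // => k hk; rewrite Hg ?hk ?orbT // IdE.
  by rewrite (_ : (i == k) = false) ?mul0r //; apply/eqP => E; subst; rewrite ltnNge hk in hi.
rewrite (@fsum1 _ i) ?Hg ?hi // ?IdE ?eqxx ?mul1r // => k hk.
by rewrite Hg ?hi // IdE (_ : (i == k) = false) ?mul0r //; apply/eqP => E; apply: hk.
Qed.

Lemma mulmE N g h : bnd N g -> bnd N h ->
  mulm g h = fun i j => if (i < N)%N && (j < N)%N then \sum_(k < N) g i k * h k j else Id i j.
Proof.
move=> Hg Hh; apply: funext => i; apply: funext => j; rewrite /mulm.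
case: (ltnP i N) => hi /=; first case: (ltnP j N) => hj /=.
- rewrite (@fsumT _ N) // => k hk; rewrite Hg ?hk ?orbT // IdE.
  by rewrite (_ : (i == k) = false) ?mul0r //; apply/eqP => E; subst; rewrite ltnNge hk in hi.
- rewrite (@fsum1 _ j) ?Hh ?hj ?orbT // ?IdE ?eqxx ?mulr1 ?Hg ?hj ?orbT // => k hk.
  by rewrite Hh ?hj ?orbT // IdE (_ : (k == j) = false) ?mulr0 //; apply/eqP.
- rewrite (@fsum1 _ i) ?Hg ?hi // ?IdE ?eqxx ?mul1r ?Hh ?hi // => k hk.
  by rewrite Hg ?hi // IdE (_ : (i == k) = false) ?mul0r //; apply/eqP => E; apply: hk.
Qed.

Lemma bnd_mulm N g h : bnd N g -> bnd N h -> bnd N (mulm g h).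
Proof.
move=> Hg Hh i j hij; rewrite (mulmE Hg Hh).
by case/orP: hij => hh; [rewrite ltnNge hh | rewrite [(j < N)%N]ltnNge hh andbF].
Qed.

Lemma bnd_le N M g : (N <= M)%N -> bnd N g -> bnd M g.
Proof.
move=> hNM Hg i j /orP [] h; apply: Hg; apply/orP; [left|right]; exact: leq_trans h.
Qed.

Lemma bnd_Id N : bnd N Id. Proof. by []. Qed.

Lemma bnd_trm N g : bnd N g -> bnd N (trm g).
Proof. by move=> Hg i j h; rewrite /trm Hg ?IdE 1?eq_sym // orbC. Qed.

Lemma appm_Id v : appm Id v = v.
Proof.
rewrite (@appmE 0) //; apply: funext => i /=; done.
Qed.

Lemma mulm_Idr g : mulm g Id = g.
Proof.
apply: funext => i; apply: funext => j; rewrite /mulm (@fsum1 _ j) ?IdE ?eqxx ?mulr1 //.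
by move=> k hk; rewrite IdE (_ : (k == j) = false) ?mulr0 //; apply/eqP.
Qed.

Lemma trm_mulm (g h : mat F) : trm (mulm g h) = mulm (trm h) (trm g).
Proof.
apply: funext => i; apply: funext => j; rewrite /trm /mulm.
by apply: eq_fsbigr => k _; rewrite mulrC.
Qed.

Lemma trm_Id : @trm F Id = Id.
Proof. by apply: funext => i; apply: funext => j; rewrite /trm !IdE eq_sym. Qed.

Lemma appm_mulm N g h v : bnd N g -> bnd N h ->
  appm g (appm h v) = appm (mulm g h) v.
Proof.
move=> Hg Hh; rewrite (appmE _ Hg) (appmE _ Hh) (appmE _ (bnd_mulm Hg Hh)) (mulmE Hg Hh).
apply: funext => i /=; case: ifP => hi; last by rewrite hi.
under eq_bigr => k _ do rewrite ltn_ord mulr_sumr.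
rewrite exchange_big /=; apply: eq_bigr => l _; rewrite ltn_ord mulr_suml.
by apply: eq_bigr => k _; rewrite mulrA.
Qed.

Lemma mulmA N g h k : bnd N g -> bnd N h -> bnd N k ->
  mulm g (mulm h k) = mulm (mulm g h) k.
Proof.
move=> Hg Hh Hk.
rewrite (mulmE Hg (bnd_mulm Hh Hk)) (mulmE (bnd_mulm Hg Hh) Hk) (mulmE Hg Hh) (mulmE Hh Hk).
apply: funext => i; apply: funext => j; case: ifP => // /andP [hi hj].
under eq_bigr => l _ do rewrite ltn_ord hj /= mulr_sumr.
rewrite exchange_big /=; apply: eq_bigr => l _; rewrite hi ltn_ord /= mulr_suml.
by apply: eq_bigr => k' _; rewrite mulrA.
Qed.


Lemma subB (S : set (vec F)) u w a : subspace S -> S u -> S w -> S (fun i => u i - a * w i).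
Proof.
case=> _ [_ Hc] Su Sw.
suff -> : (fun i => u i - a * w i) = (fun i => -a * w i + u i) by apply: Hc.
by apply: funext => i; rewrite mulNr addrC.
Qed.

Definition Mx (x : mat F) r m : mat F := fun i j =>
  if (i < m)%N && (j < m)%N then x i j - r * x i m * x m j else Id i j.

Lemma bnd_Mx x r m : bnd m (Mx x r m).
Proof.
move=> i j /orP [] h; rewrite /Mx; first by rewrite ltnNge h.
by rewrite [(j < m)%N]ltnNge h andbF.
Qed.

Lemma sum2 m (A B : 'I_m -> F) a :
  \sum_(k < m) (A k - a * B k) = \sum_(k < m) A k - a * \sum_(k < m) B k.
Proof. by rewrite sumrB mulr_sumr. Qed.

Lemma Gen m x r (V1 V2 : set (vec F)) : bnd m.+1 x -> subspace V2 ->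
  (forall i, (m <= i)%N -> V2 (e i)) -> V1 (e m) ->
  (forall v, V1 v -> V2 (appm x v)) -> forall v, V1 v -> V2 (appm (Mx x r m) v).
Proof.
move=> Hx S2 E2 E1 Hxv v Hv.
set s := \sum_(k < m) x m k * v k.
have h1 := Hxv _ Hv; have h2 := Hxv _ E1; have h3 := E2 m (leqnn m).
have w1 := subB (x m m) S2 h2 h3; have w2 := subB 1 S2 h2 h3.
have H := subB s S2 (subB (v m) S2 (subB (r * s) S2 h1 w1) w2) h3.
apply: (eq_ind _ V2 H); apply: funext => i /=.
rewrite (appmE _ (@bnd_Mx x r m)) (appmE _ Hx) !appm_e /ebasis /Mx.
case: (ltngtP i m) => hi.
- rewrite ltnS (ltnW hi) big_ord_recr /= ?mulr0n ?mulr1n.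
  rewrite [RHS](eq_bigr (fun k : 'I_m => x i k * v k - (r * x i m) * (x m k * v k))); last first.
    by move=> k _; rewrite /= ltn_ord; ring.
  rewrite sum2 -/s; ring.
- rewrite ltnNge hi /= (Hx i m) ?hi // IdE (_ : (i == m) = false) ?mulr0n ?mulr1n; first ring.
  by apply/eqP => E; subst; rewrite ltnn in hi.
- subst i; rewrite ltnSn big_ord_recr /= -/s ?mulr0n ?mulr1n; ring.
Qed.

Lemma Id_neq i j : i != j -> Id i j = 0.
Proof. by move=> h; rewrite IdE (negbTE h). Qed.
Lemma Id_eq i : Id i i = 1.
Proof. by rewrite IdE eqxx. Qed.

Lemma split_last m (f : nat -> F) c : \sum_(k < m.+1) f k = c -> \sum_(k < m) f k = c - f m.
Proof. by rewrite big_ord_recr /= => <-; rewrite addrK. Qed.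

Lemma sum4 m (A B C D : 'I_m -> F) a b c :
  \sum_(k < m) (A k - a * B k - b * C k + c * D k) =
  \sum_(k < m) A k - a * \sum_(k < m) B k - b * \sum_(k < m) C k + c * \sum_(k < m) D k.
Proof. by rewrite big_split /= !sumrB -!mulr_sumr. Qed.

Lemma prodM m x y s t : bnd m.+1 x -> bnd m.+1 y -> mulm x y = Id ->
  -1 + t * y m m + s * x m m + s * t * (1 - x m m * y m m) = 0 ->
  mulm (Mx x s m) (Mx y t m) = Id.
Proof.
move=> Hx Hy Hxy K.
have H i j : (i < m.+1)%N -> (j < m.+1)%N -> \sum_(k < m.+1) x i k * y k j = Id i j.
  by move=> hi hj; have := congr1 (fun f => f i j) Hxy; rewrite (mulmE Hx Hy) /= hi hj.
rewrite (mulmE (@bnd_Mx x s m) (@bnd_Mx y t m)); apply: funext => i; apply: funext => j.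
case: ifP => // /andP [hi hj].
rewrite (eq_bigr (fun k : 'I_m => x i k * y k j - t * y m j * (x i k * y k m)
   - s * x i m * (x m k * y k j) + s * t * x i m * y m j * (x m k * y k m))); last first.
  by move=> k _; rewrite /Mx hi hj ltn_ord /=; ring.
rewrite sum4.
rewrite (split_last (f := fun k => x i k * y k j) (H i j (ltnW hi) (ltnW hj))).
rewrite (split_last (f := fun k => x i k * y k m) (H i m (ltnW hi) (ltnSn m))).
rewrite (split_last (f := fun k => x m k * y k j) (H m j (ltnSn m) (ltnW hj))).
rewrite (split_last (f := fun k => x m k * y k m) (H m m (ltnSn m) (ltnSn m))).
have e1 : Id i m = 0 by rewrite Id_neq // ltn_eqF.
have e2 : Id m j = 0 by rewrite Id_neq // eq_sym ltn_eqF.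
rewrite Id_eq e1 e2.
transitivity (Id i j + x i m * y m j * (-1 + t * y m m + s * x m m + s * t * (1 - x m m * y m m))); first ring.
by rewrite K mulr0 addr0.
Qed.

Lemma commM m x g1 g2 s : bnd m.+1 x -> bnd m g1 -> bnd m g2 ->
  mulm x g1 = mulm g2 x -> mulm (Mx x s m) g1 = mulm g2 (Mx x s m).
Proof.
move=> Hx Hg1 Hg2 Hxg.
have Hg1' := bnd_le (leqnSn m) Hg1; have Hg2' := bnd_le (leqnSn m) Hg2.
have H i j : (i < m.+1)%N -> (j < m.+1)%N ->
    \sum_(k < m.+1) x i k * g1 k j = \sum_(k < m.+1) g2 i k * x k j.
  by move=> hi hj; have := congr1 (fun f => f i j) Hxg; rewrite (mulmE Hx Hg1') (mulmE Hg2' Hx) /= hi hj.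
rewrite (mulmE (@bnd_Mx x s m) Hg1) (mulmE Hg2 (@bnd_Mx x s m)); apply: funext => i; apply: funext => j.
case: ifP => // /andP [hi hj].
rewrite [LHS](eq_bigr (fun k : 'I_m => x i k * g1 k j - s * x i m * (x m k * g1 k j))); last first.
  by move=> k _; rewrite /Mx hi ltn_ord /=; ring.
rewrite [RHS](eq_bigr (fun k : 'I_m => g2 i k * x k j - s * x m j * (g2 i k * x k m))); last first.
  by move=> k _; rewrite /Mx hj ltn_ord /=; ring.
rewrite !sum2.
have A : \sum_(k < m) x i k * g1 k j = \sum_(k < m) g2 i k * x k j.
  have := H i j (ltnW hi) (ltnW hj); rewrite !big_ord_recr /= (Hg1 m j) ?leqnn // (Hg2 i m) ?leqnn ?orbT //.
  have e1 : Id i m = 0 by rewrite Id_neq // ltn_eqF.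
  have e2 : Id m j = 0 by rewrite Id_neq // eq_sym ltn_eqF.
  by rewrite e1 e2 mulr0 mul0r !addr0.
have B : \sum_(k < m) x m k * g1 k j = x m j.
  have := H m j (ltnSn m) (ltnW hj); rewrite !big_ord_recr /= (Hg1 m j) ?leqnn // (Hg2 m m) ?leqnn //.
  have e2 : Id m j = 0 by rewrite Id_neq // eq_sym ltn_eqF.
  rewrite Id_eq e2 mulr0 addr0 mul1r => ->.
  rewrite big1 ?add0r // => k _; rewrite (Hg2 m k) ?leqnn // Id_neq ?mul0r //.
  by rewrite eq_sym ltn_eqF.
have C : \sum_(k < m) g2 i k * x k m = x i m.
  have := H i m (ltnW hi) (ltnSn m); rewrite !big_ord_recr /= (Hg1 m m) ?leqnn // (Hg2 i m) ?leqnn ?orbT //.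
  rewrite Id_eq Id_neq ?ltn_eqF // mul0r addr0 mulr1 => <-.
  rewrite big1 ?add0r // => k _; rewrite (Hg1 k m) ?leqnn ?orbT // Id_neq ?mulr0 //.
  by rewrite ltn_eqF.
by rewrite A B C; ring.
Qed.

Lemma trm_Mx x r m : trm (Mx x r m) = Mx (trm x) r m.
Proof.
apply: funext => i; apply: funext => j; rewrite /trm /Mx andbC.
by case: ifP => _; [ring | rewrite !IdE eq_sym].
Qed.

Lemma step m (W1 V1 W2 V2 : set (vec F)) g1 g2 x y :
  subspace V1 -> subspace V2 -> subspace W1 -> subspace W2 ->
  (forall i, (m <= i)%N -> [/\ V1 (e i), V2 (e i), W1 (e i) & W2 (e i)]) ->
  bnd m g1 -> bnd m g2 -> bnd m.+1 x -> bnd m.+1 y -> mulm x y = Id -> mulm y x = Id ->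
  W2 = appm (trm y) @` W1 -> g2 = mulm (mulm x g1) y -> V2 = appm x @` V1 ->
  exists z z', [/\ bnd m z, bnd m z', mulm z z' = Id, mulm z' z = Id &
     [/\ W2 = appm (trm z') @` W1, g2 = mulm (mulm z g1) z' & V2 = appm z @` V1]].
Proof.
move=> SV1 SV2 SW1 SW2 E Hg1 Hg2 Hx Hy Hxy Hyx HW Hg HV.
have EV1 : forall i, (m <= i)%N -> V1 (e i) by move=> i /E [].
have EV2 : forall i, (m <= i)%N -> V2 (e i) by move=> i /E [].
have EW1 : forall i, (m <= i)%N -> W1 (e i) by move=> i /E [].
have EW2 : forall i, (m <= i)%N -> W2 (e i) by move=> i /E [].
have [t Ht] : exists t : F, t = if x m m == 0 then 1 else 0 by eexists.
have [del Edel] : exists del : F, del = x m m + t * (1 - x m m * y m m) by eexists.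
have Hdel : del != 0.
  rewrite Edel Ht; case: (eqVneq (x m m) 0) => [->|hd].
    by rewrite mul0r subr0 add0r mulr1 oner_neq0.
  by rewrite mul0r addr0.
have [s Hs] : exists s : F, s = (1 - t * y m m) / del by eexists.
have K1 : -1 + t * y m m + s * x m m + s * t * (1 - x m m * y m m) = 0.
  transitivity (-1 + t * y m m + s * del); first by rewrite Edel; ring.
  by rewrite Hs divfK //; ring.
have K2 : -1 + s * x m m + t * y m m + t * s * (1 - y m m * x m m) = 0.
  by rewrite -K1; ring.
have Hz := @bnd_Mx x s m; have Hz' := @bnd_Mx y t m.
have P1 : mulm (Mx x s m) (Mx y t m) = Id := prodM Hx Hy Hxy K1.
have P2 : mulm (Mx y t m) (Mx x s m) = Id := prodM Hy Hx Hyx K2.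
have xV : forall v, V1 v -> V2 (appm x v) by move=> v hv; rewrite HV; exists v.
have yV : forall v, V2 v -> V1 (appm y v).
  by rewrite HV => v [u hu <-]; rewrite (appm_mulm _ Hy Hx) Hyx appm_Id.
have yW : forall w, W1 w -> W2 (appm (trm y) w) by move=> w hw; rewrite HW; exists w.
have xW : forall w, W2 w -> W1 (appm (trm x) w).
  rewrite HW => w [u hu <-].
  by rewrite (appm_mulm _ (bnd_trm Hx) (bnd_trm Hy)) -trm_mulm Hyx trm_Id appm_Id.
have zV := Gen s Hx SV2 EV2 (EV1 m (leqnn m)) xV.
have z'V := Gen t Hy SV1 EV1 (EV2 m (leqnn m)) yV.
have z'W := Gen t (bnd_trm Hy) SW2 EW2 (EW1 m (leqnn m)) yW.
have zW := Gen s (bnd_trm Hx) SW1 EW1 (EW2 m (leqnn m)) xW.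
exists (Mx x s m), (Mx y t m); split => //; split.
- rewrite trm_Mx; apply/seteqP; split.
    move=> w hw; exists (appm (Mx (trm x) s m) w); first exact: zW.
    rewrite (appm_mulm _ (@bnd_Mx (trm y) t m) (@bnd_Mx (trm x) s m)) -(trm_Mx y) -(trm_Mx x) -trm_mulm P1 trm_Id.
    exact: appm_Id.
  by move=> _ [w hw <-]; apply: z'W.
- have Hg1' := bnd_le (leqnSn m) Hg1.
  have XG : mulm x g1 = mulm g2 x.
    by rewrite Hg -(mulmA (bnd_mulm Hx Hg1') Hy Hx) Hyx mulm_Idr.
  have C := commM s Hx Hg1 Hg2 XG.
  by rewrite C -(mulmA Hg2 Hz Hz') P1 mulm_Idr.
- apply/seteqP; split.
    move=> v hv; exists (appm (Mx y t m) v); first exact: z'V.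
    by rewrite (appm_mulm _ Hz Hz') P1 appm_Id.
  by move=> _ [v hv <-]; apply: zV.
Qed.

Lemma descend n (W1 V1 W2 V2 : set (vec F)) g1 g2 :
  subspace V1 -> subspace V2 -> subspace W1 -> subspace W2 ->
  (forall i, (n <= i)%N -> [/\ V1 (e i), V2 (e i), W1 (e i) & W2 (e i)]) ->
  bnd n g1 -> bnd n g2 -> forall k x y,
  bnd (n + k) x -> bnd (n + k) y -> mulm x y = Id -> mulm y x = Id ->
  W2 = appm (trm y) @` W1 -> g2 = mulm (mulm x g1) y -> V2 = appm x @` V1 ->
  exists z z', [/\ bnd n z, bnd n z', mulm z z' = Id &
     [/\ W2 = appm (trm z') @` W1, g2 = mulm (mulm z g1) z' & V2 = appm z @` V1]].
Proof.
move=> SV1 SV2 SW1 SW2 E Hg1 Hg2; elim=> [|k IH] x y.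
  by rewrite addn0 => Hx Hy Hxy Hyx HW Hg HV; exists x, y.
rewrite addnS => Hx Hy Hxy Hyx HW Hg HV.
have Hnk := leq_addr k n.
have E' : forall i, (n + k <= i)%N -> [/\ V1 (e i), V2 (e i), W1 (e i) & W2 (e i)].
  by move=> i hi; apply: E; exact: leq_trans hi.
have [z [z' [Hz Hz' Hzz' Hz'z [HW' Hg' HV']]]] :=
  step SV1 SV2 SW1 SW2 E' (bnd_le Hnk Hg1) (bnd_le Hnk Hg2) Hx Hy Hxy Hyx HW Hg HV.
exact: IH Hz Hz' Hzz' Hz'z HW' Hg' HV'.
Qed.

Lemma embGL_toM n (z : mat F) : bnd n z ->
  embGL (\matrix_(i < n, j < n) z i j) = z.
Proof.
move=> Hz; apply: funext => i; apply: funext => j; rewrite /embGL.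
case: (insubP 'I_n i) => [i' hi <-|hi]; case: (insubP 'I_n j) => [j' hj <-|hj]; rewrite ?mxE //.
- by rewrite Hz // [(n <= j)%N]leqNgt hj orbT.
- by rewrite Hz // leqNgt hi.
- by rewrite Hz // leqNgt hi.
Qed.

Lemma bnd_of_fix n (W V : set (vec F)) g : fixes g V -> fixes (trm g) W ->
  (forall i, (n <= i)%N -> V (e i) /\ W (e i)) -> bnd n g.
Proof.
move=> FV FW E i j /orP [] h.
  have := congr1 (fun f => f j) (FW _ (E i h).2); rewrite /= appm_e /trm /ebasis => ->.
  by rewrite IdE.
have := congr1 (fun f => f i) (FV _ (E j h).1); rewrite /= appm_e /ebasis => ->.
by rewrite IdE eq_sym.
Qed.

End S.

Unset Implicit Arguments. Set Strict Implicit.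
Local Close Scope classical_set_scope.

Theorem proposition4p11 (F : finFieldType) (n : nat) (T1 T2 : triple F) :
  BT n T1 -> BT n T2 ->
  (exists x y : mat F, GLinv x y /\ act x y T1 = T2) ->
  exists A : 'M[F]_n, A \in unitmx /\
    act (embGL A) (embGL (invmx A)) T1 = T2.
Proof.
case: T1 => [[W1 g1] V1]; case: T2 => [[W2 g2] V2].
move=> [[[SW1 _] [SV1 _] _ F1 FT1] E1] [[[SW2 _] [SV2 _] _ F2 FT2] E2].
move=> [x [y [[[Nx Hx] [[Ny Hy] [Hxy Hyx]]] Hact]]].
case: Hact => HW Hg HV.
have Hg1 := bnd_of_fix F1 FT1 E1.
have Hg2 := bnd_of_fix F2 FT2 E2.
have E : forall i, (n <= i)%N -> [/\ V1 (ebasis F i), V2 (ebasis F i), W1 (ebasis F i) & W2 (ebasis F i)].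
  by move=> i hi; case: (E1 i hi) => ? ?; case: (E2 i hi) => ? ?; split.
pose N := maxn n (maxn Nx Ny).
have hnN : (n <= N)%N := leq_maxl _ _.
have Hx' : bnd (n + (N - n)) x.
  by rewrite subnKC //; apply: bnd_le Hx; rewrite /N (leq_trans (leq_maxl Nx Ny)) // leq_maxr.
have Hy' : bnd (n + (N - n)) y.
  by rewrite subnKC //; apply: bnd_le Hy; rewrite /N (leq_trans (leq_maxr Nx Ny)) // leq_maxr.
have [z [z' [Hz Hz' Hzz' [HW' Hg' HV']]]] :=
  descend SV1 SV2 SW1 SW2 E Hg1 Hg2 Hx' Hy' Hxy Hyx (esym HW) (esym Hg) (esym HV).
pose A := \matrix_(i < n, j < n) z i j.
pose A' := \matrix_(i < n, j < n) z' i j.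
have AA : A *m A' = 1%:M.
  apply/matrixP => i j; rewrite !mxE.
  under eq_bigr => k _ do rewrite !mxE.
  have := congr1 (fun f : mat F => f i j) Hzz'; rewrite (mulmE Hz Hz') /= !ltn_ord /= => ->.
  by rewrite IdE.
have [UA _] := mulmx1_unit AA.
have IA : invmx A = A' by rewrite -[invmx A]mulmx1 -AA mulmxA mulVmx // mul1mx.
exists A; split => //.
rewrite IA /A /A' !embGL_toM //=.
by rewrite HW' Hg' HV'.
Qed.
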